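(* Let $P$ be a weighted answer set program, with total choices $\mathcal{T}$, consistent events $\mathcal{C}$, and the probability functions $P_{\mathcal{T}}$ on total choices and $P_{\mathcal{E}}$ on events defined below. If there is a consistent event $e\in\mathcal{C}\setminus\mathcal{T}$ with $P_{\mathcal{E}}(e)\neq 0$, then there is at least one total choice $t\in\mathcal{T}$ with $P_{\mathcal{T}}(t)\neq P_{\mathcal{E}}(t)$.
   Context: Let $\mathcal{A}$ be a finite set of positive atoms; atoms are $a$ and $\overline a$ (classical negation $\neg a$) for $a\in\mathcal{A}$. A weighted answer set program (WASP) is an answer set program (rules $h_1\vee\dots\vee h_n\leftarrow b_1\wedge\dots\wedge b_m$, $h_i$ atoms, $b_j$ atoms or $\mathrm{not}\,a$) together with a set $\mathcal{W}$ of weighted facts $a:w$, $a\in\mathcal{A}$, $w\in[0,1]$; $\mathcal{A}_{\mathcal{W}}$ is the set of atoms occurring in weighted facts. The derived program replaces each $a:w$ by $a\vee\overline a$; the stable models of the WASP are the (Gelfond–Lifschitz) stable models of the derived program; their set is $\mathcal{M}$. Events are subsets of $\{a,\overline a:a\in\mathcal{A}\}$ (set $\mathcal{E}$); an event is inconsistent if it contains some $x$ and $\overline x$, else consistent (set $\mathcal{C}$). A total choice is a set containing exactly one of $a,\overline a$ for each $a\in\mathcal{A}_{\mathcal{W}}$ (so total choices are events); $\mathcal{T}$ is their set. Its weight is $w_{\mathcal{T}}(t)=\prod_{a:w\in\mathcal{W},\,a\in t} w\cdot\prod_{a:w\in\mathcal{W},\,\overline a\in t}(1-w)$, and $P_{\mathcal{T}}(t)=w_{\mathcal{T}}(t)/\sum_{\tau\in\mathcal{T}}w_{\mathcal{T}}(\tau)$.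 For $t\in\mathcal{T}$, $\mathcal{M}(t)\subseteq\mathcal{M}$ is the set of stable models entailed by $t$ (stable models of the program with each weighted fact replaced by the fact chosen in $t$). Parameters $\theta_{s,t}\in[0,1]$ are given for $s\in\mathcal{M}(t)$ with $\sum_{s\in\mathcal{M}(t)}\theta_{s,t}=1$; set $w_{\mathcal{M}}(s,t)=\theta_{s,t}$ if $s\in\mathcal{M}(t)$ and $0$ otherwise, and $w_{\mathcal{M}}(X,t)=\sum_{s\in X}w_{\mathcal{M}}(s,t)$ for $X\subseteq\mathcal{M}$. The stable core of an event $e$ is $\sigma(e)=\{s\in\mathcal{M}: s\subseteq e\text{ or }e\subseteq s\}$. Events $u\sim v$ iff both are inconsistent or both are consistent with $\sigma(u)=\sigma(v)$; $[e]$ is the class of $e$ and $\#[e]$ its cardinality. Define $w_{\mathcal{R}}([e],t)=0$ if $e$ is inconsistent and $w_{\mathcal{R}}([e],t)=w_{\mathcal{M}}(\sigma(e),t)$ otherwise; $w_{\mathcal{E}}(e,t)=w_{\mathcal{R}}([e],t)/\#[e]$ (and $0$ if $\#[e]=0$); $w_{\mathcal{E}}(e)=\sum_{t\in\mathcal{T}}w_{\mathcal{T}}(t)\,w_{\mathcal{E}}(e,t)$; $Z=\sum_{e\in\mathcal{E}}w_{\mathcal{E}}(e)$; and $P_{\mathcal{E}}(e)=w_{\mathcal{E}}(e)/Z$. *)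

(* Defs.v *)
From mathcomp Require Import all_boot all_order all_algebra.
Set Implicit Arguments. Unset Strict Implicit. Unset Printing Implicit Defensive.
Import Order.TTheory GRing.Theory Num.Theory.
Local Open Scope ring_scope.

Section WASP.
Variable R : realFieldType.
Variable A : finType.

(* literals: (a, true) is the atom a, (a, false) is its classical negation abar *)
Definition lit := (A * bool)%type.
Definition event := {set lit}.

(* a rule  h_1 v ... v h_n <- b_1, ..., b_k, not c_1, ..., not c_m *)
Record rule := Rule { head : seq lit; pbody : seq lit; nbody : seq lit }.
Definition program := seq rule.

Definition consistent (e : event) : bool :=
  [forall a : A, ~~ (((a, true) \in e) && ((a, false) \in e))].

(* X satisfies the Gelfond-Lifschitz reduct of P w.r.t. M *)
Definition closed_reduct (P : program) (M X : event) : bool :=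
  all (fun r => ~~ has (fun c => c \in M) (nbody r) ==>
                 (all (fun b => b \in X) (pbody r) ==> has (fun h => h \in X) (head r))) P.

Definition stable (P : program) (M : event) : bool :=
  [&& consistent M, closed_reduct P M M &
      [forall X : {set lit}, ((X \subset M) && closed_reduct P M X) ==> (X == M)]].

Definition stable_models (P : program) : {set event} := [set M | stable P M].

(* weighted facts a : w, at most one weight per atom *)
Variable prog : program.
Variable wt : A -> option R.

Definition inW (a : A) : bool := wt a != None.

Definition fact (x : lit) : rule := Rule [:: x] [::] [::].

Definition derived_program : program :=
  prog ++ [seq Rule [:: (a, true); (a, false)] [::] [::] | a <- enum A & inW a].

Definition MM : {set event} := stable_models derived_program.

Definition total_choice (t : event) : bool :=
  [forall a : A, if inW a then ((a, true) \in t) (+) ((a, false) \in t)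
                 else ((a, true) \notin t) && ((a, false) \notin t)].

Definition wT (t : event) : R :=
  \prod_(a : A) match wt a with
                | Some w => if (a, true) \in t then w else 1 - w
                | None => 1
                end.

Definition PT (t : event) : R :=
  wT t / \sum_(tau : {set lit} | total_choice tau) wT tau.

Definition Mt (t : event) : {set event} :=
  stable_models (prog ++ [seq fact x | x <- enum t]).

Variable theta : event -> event -> R.

Definition wM (X : {set event}) (t : event) : R :=
  \sum_(s in X) (if s \in Mt t then theta s t else 0).

Definition sigma (e : event) : {set event} :=
  [set s in MM | (s \subset e) || (e \subset s)].

Definition ev_equiv (u v : event) : bool :=
  (~~ consistent u && ~~ consistent v) ||
  [&& consistent u, consistent v & sigma u == sigma v].

Definition ev_class (e : event) : {set event} := [set u | ev_equiv u e].

Definition wR (e : event) (t : event) : R :=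
  if consistent e then wM (sigma e) t else 0.

Definition wEt (e t : event) : R :=
  if #|ev_class e| == 0%N then 0 else wR e t / (#|ev_class e|)%:R.

Definition wE (e : event) : R :=
  \sum_(t : {set lit} | total_choice t) wT t * wEt e t.

Definition Z : R := \sum_(e : {set lit}) wE e.

Definition PE (e : event) : R := wE e / Z.

End WASP.

(* Main.v *)
Require Import Defs.
From mathcomp Require Import all_boot all_order all_algebra.
Import Order.TTheory GRing.Theory Num.Theory.
Local Open Scope ring_scope.

Theorem mainTheorem2 (R : realFieldType) (A : finType)
  (prog : program A) (wt : A -> option R)
  (theta : event A -> event A -> R) :
  (forall a w, wt a = Some w -> 0 <= w <= 1) ->
  (forall t : event A, total_choice wt t ->
     (forall s, s \in Mt prog t -> 0 <= theta s t <= 1) /\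
     \sum_(s in Mt prog t) theta s t = 1) ->
  (exists e : event A, consistent e /\ ~~ total_choice wt e /\
     PE prog wt theta e != 0) ->
  exists t : event A, total_choice wt t /\ PT wt t != PE prog wt theta t.
Proof.
move=> Hw Hth [e [_ [He HPe]]].
have wT_ge0 : forall t, 0 <= wT wt t.
  move=> t; rewrite /wT; apply: prodr_ge0 => a _.
  case E: (wt a) => [w|] //; have /andP[h0 h1] := Hw _ _ E.
  by case: ifP => _ //; rewrite subr_ge0.
have wEt_ge0 : forall e' t, total_choice wt t -> 0 <= wEt prog wt theta e' t.
  move=> e' t Ht; rewrite /wEt; case: ifP => _ //.
  apply: divr_ge0 => //; rewrite /wR; case: ifP => _ //.
  rewrite /wM; apply: sumr_ge0 => s _; case: ifP => // Hs.
  by have /andP[] := (Hth t Ht).1 s Hs.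
have wE_ge0 : forall e', 0 <= wE prog wt theta e'.
  move=> e'; rewrite /wE; apply: sumr_ge0 => t Ht.
  by apply: mulr_ge0; [apply: wT_ge0 | apply: wEt_ge0].
have PE_ge0 : forall e', 0 <= PE prog wt theta e'.
  move=> e'; rewrite /PE; apply: divr_ge0 => //.
  by rewrite /Z; apply: sumr_ge0 => ? _.
have Z0 : Z prog wt theta != 0.
  by apply: contraNneq HPe => Z0; rewrite /PE Z0 invr0 mulr0.
set D := \sum_(tau : {set lit A} | total_choice wt tau) wT wt tau.
have D0 : D != 0.
  apply: contraNneq Z0 => D0.
  have hz := psumr_eq0P (fun t _ => wT_ge0 t) D0.
  rewrite /Z big1 // => e' _; rewrite /wE big1 // => t Ht.
  by rewrite hz // mul0r.
case: (boolP [exists t : {set lit A}, total_choice wt t && (PT wt t != PE prog wt theta t)]).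
  by case/existsP => t /andP[h1 h2]; exists t.
rewrite negb_exists => /forallP H.
have H' : forall t, total_choice wt t -> PE prog wt theta t = PT wt t.
  move=> t Ht; have := H t; rewrite Ht /= negbK => /eqP ->//.
have S1 : \sum_(t : {set lit A} | total_choice wt t) PE prog wt theta t = 1.
  rewrite (eq_bigr (fun t => PT wt t)) //.
  by rewrite /PT -mulr_suml divff.
have S2 : \sum_(t : {set lit A}) PE prog wt theta t = 1.
  by rewrite /PE -mulr_suml divff.
rewrite (bigID (fun t => total_choice wt t)) /= S1 in S2.
have S3 : \sum_(t : {set lit A} | ~~ total_choice wt t) PE prog wt theta t = 0.
  by apply: (addrI 1); rewrite S2 addr0.
have := psumr_eq0P (fun t _ => PE_ge0 t) S3 He.
by move/eqP: HPe.
Qed.
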